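(* Let $n\in\mathbb{N}$ and let $a_1,\ldots,a_n\ge0$ satisfy $\sum_{j=1}^n a_j=n$. Let $$\mathcal{E}=\Big\{x=(x_1,\ldots,x_n)^t\in\mathbb{R}^n\;\Big|\;\sum_{j=1}^n a_jx_j^2=1\Big\}.$$ Then there is an orthonormal basis $v_1,\ldots,v_n$ of $\mathbb{R}^n$ with $v_j\in\mathcal{E}$ for all $j$. *)

(* Defs.v *)
From mathcomp Require Import all_boot all_order all_algebra.
From mathcomp Require Import reals.
Set Implicit Arguments. Unset Strict Implicit. Unset Printing Implicit Defensive.
Import Order.TTheory GRing.Theory Num.Theory.
Local Open Scope ring_scope.

(* R^n vectors are row vectors 'rV[R]_n; coordinate j is x 0 j. *)

Definition dotv (R : realType) (n : nat) (x y : 'rV[R]_n) : R :=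
  \sum_(j < n) x 0 j * y 0 j.

Definition ellipsoid (R : realType) (n : nat) (a : 'I_n -> R) (x : 'rV[R]_n) : Prop :=
  \sum_(j < n) a j * x 0 j ^+ 2 = 1.

(* v : 'I_n -> 'rV_n is an orthonormal basis of R^n: pairwise orthonormal n
   vectors (hence linearly independent, hence spanning) and, explicitly, a
   basis (the matrix with rows v j is invertible). *)
Definition orthonormal_basis (R : realType) (n : nat) (v : 'I_n -> 'rV[R]_n) : Prop :=
  (forall i j, dotv (v i) (v j) = (i == j)%:R) /\
  (\matrix_(i < n) v i) \in unitmx.

(* Main.v *)
Require Import Defs.
From mathcomp Require Import all_boot all_order all_algebra.
From mathcomp Require Import reals.
From mathcomp Require Import ring lra.
Import Order.TTheory GRing.Theory Num.Theory.
Local Open Scope ring_scope.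

Definition Qf (R : realType) (N : nat) (a : 'I_N -> R) (x y : 'rV[R]_N) : R :=
  \sum_(j < N) a j * (x 0 j * y 0 j).
Arguments Qf {R N} a x y.

Lemma dotvC (R : realType) (N : nat) (x y : 'rV[R]_N) : dotv x y = dotv y x.
Proof. by rewrite /dotv; apply: eq_bigr => j _; rewrite mulrC. Qed.

Lemma dotvDl (R : realType) (N : nat) (k l : R) (x y z : 'rV[R]_N) :
  dotv (k *: x + l *: y) z = k * dotv x z + l * dotv y z.
Proof.
rewrite /dotv !mulr_sumr -big_split; apply: eq_bigr => j _; rewrite !mxE /=; ring.
Qed.

Lemma dotvDr (R : realType) (N : nat) (k l : R) (x y z : 'rV[R]_N) :
  dotv z (k *: x + l *: y) = k * dotv z x + l * dotv z y.
Proof. by rewrite dotvC dotvDl ![dotv _ z]dotvC. Qed.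

Lemma QfC (R : realType) (N : nat) (a : 'I_N -> R) (x y : 'rV[R]_N) : Qf a x y = Qf a y x.
Proof. by rewrite /Qf; apply: eq_bigr => j _; rewrite [x 0 j * _]mulrC. Qed.

Lemma QfDl (R : realType) (N : nat) (a : 'I_N -> R) (k l : R) (x y z : 'rV[R]_N) :
  Qf a (k *: x + l *: y) z = k * Qf a x z + l * Qf a y z.
Proof.
rewrite /Qf !mulr_sumr -big_split; apply: eq_bigr => j _; rewrite !mxE /=; ring.
Qed.

Lemma QfDr (R : realType) (N : nat) (a : 'I_N -> R) (k l : R) (x y z : 'rV[R]_N) :
  Qf a z (k *: x + l *: y) = k * Qf a z x + l * Qf a z y.
Proof. by rewrite QfC QfDl ![Qf a _ z]QfC. Qed.

Lemma pairwise_rem (T : eqType) (r : rel T) (s : seq T) (x : T) :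
  symmetric r -> pairwise r s -> x \in s -> pairwise r (x :: rem x s).
Proof.
move=> rS; elim: s => [//|z s IH]; rewrite pairwise_cons => /andP[hz hs].
rewrite inE; case: eqVneq => [->|nxz] /= hx.
  by rewrite eqxx hz hs.
rewrite eq_sym (negbTE nxz) /=.
have := IH hs hx; rewrite pairwise_cons => /andP[h1 h2].
rewrite h1 h2 rS (allP hz _ hx) /= andbT.
apply/allP => y hy; apply: (allP hz); exact: mem_rem hy.
Qed.

Lemma sum_ge_size (R : realType) (T : eqType) (f : T -> R) (s : seq T) :
  (forall u, u \in s -> 1 <= f u) -> (size s)%:R <= \sum_(u <- s) f u.
Proof.
elim: s => [|x s IH] h; first by rewrite big_nil.
rewrite big_cons /= -addn1 natrD addrC lerD //.
  by apply: h; rewrite inE eqxx.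
by apply: IH => u hu; apply: h; rewrite inE hu orbT.
Qed.

Lemma sum_le_size (R : realType) (T : eqType) (f : T -> R) (s : seq T) :
  (forall u, u \in s -> f u <= 1) -> \sum_(u <- s) f u <= (size s)%:R.
Proof.
elim: s => [|x s IH] h; first by rewrite big_nil.
rewrite big_cons /= -addn1 natrD addrC lerD //.
  by apply: IH => u hu; apply: h; rewrite inE hu orbT.
by apply: h; rewrite inE eqxx.
Qed.

Lemma exists_le1 (R : realType) (T : eqType) (f : T -> R) (s : seq T) :
  s != [::] -> \sum_(u <- s) f u <= (size s)%:R -> exists2 u, u \in s & f u <= 1.
Proof.
case: s => [//|x s] _ hs.
case: (boolP (has (fun u => f u <= 1) (x :: s))) => [/hasP [u hu hf]|].
  by exists u.
move/hasPn => hn; exfalso.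
have h1 : 1 < f x by rewrite ltNge; apply: hn; rewrite inE eqxx.
have h2 : (size s)%:R <= \sum_(u <- s) f u.
  apply: sum_ge_size => u hu; rewrite leNgt.
  by apply/negP => /ltW hu'; move: (hn u); rewrite inE hu orbT hu' => /(_ isT).
move: hs; rewrite big_cons /= -addn1 natrD; lra.
Qed.

Lemma exists_ge1 (R : realType) (T : eqType) (f : T -> R) (s : seq T) :
  s != [::] -> (size s)%:R <= \sum_(u <- s) f u -> exists2 u, u \in s & 1 <= f u.
Proof.
case: s => [//|x s] _ hs.
case: (boolP (has (fun u => 1 <= f u) (x :: s))) => [/hasP [u hu hf]|].
  by exists u.
move/hasPn => hn; exfalso.
have h1 : f x < 1 by rewrite ltNge; apply: hn; rewrite inE eqxx.
have h2 : \sum_(u <- s) f u <= (size s)%:R.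
  apply: sum_le_size => u hu; rewrite leNgt.
  by apply/negP => /ltW hu'; move: (hn u); rewrite inE hu orbT hu' => /(_ isT).
move: hs; rewrite big_cons /= -addn1 natrD; lra.
Qed.

Lemma rotation (R : realType) (x y : R) : x <= 1 -> 1 <= y ->
  exists c s : R, c ^+ 2 + s ^+ 2 = 1 /\ c ^+ 2 * x + s ^+ 2 * y = 1.
Proof.
move=> hx hy.
case: (eqVneq x y) => [exy|nxy].
  exists 1, 0; split; first by rewrite expr1n expr0n /= addr0.
  rewrite expr1n expr0n /= mul0r addr0 mul1r; rewrite -exy in hy; lra.
have hd : 0 < y - x by rewrite subr_gt0 lt_neqAle nxy /=; lra.
set l := (y - 1) / (y - x).
have hl : l * (y - x) = y - 1 by rewrite /l divfK // gt_eqF.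
have l0 : 0 <= l by rewrite /l divr_ge0 //; lra.
have l1 : l <= 1 by rewrite /l ler_pdivrMr //; lra.
exists (Num.sqrt l), (Num.sqrt (1 - l)).
rewrite !sqr_sqrtr //; last by lra.
split; first by ring.
have -> : l * x + (1 - l) * y = y - l * (y - x) by ring.
rewrite hl; ring.
Qed.

Lemma main_lemma (R : realType) (N : nat) (a : 'I_N -> R) (k : nat) :
  forall s : seq 'rV[R]_N, size s = k ->
  all (fun u => dotv u u == 1) s ->
  pairwise (fun u v => dotv u v == 0) s ->
  pairwise (fun u v => Qf a u v == 0) s ->
  \sum_(u <- s) Qf a u u = k%:R ->
  exists t : seq 'rV[R]_N, [/\ size t = k, all (fun u => dotv u u == 1) t,
    pairwise (fun u v => dotv u v == 0) t, all (fun u => Qf a u u == 1) t &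
    forall x, all (fun u => dotv x u == 0) s -> all (fun u => dotv x u == 0) t].
Proof.
elim: k => [|k IH] s hsz hn hd hq hsum.
  by exists [::]; split.
case: k IH hsz hsum => [|k] IH hsz hsum.
  case: s hsz hn hd hq hsum => [|u [|? ?]] //= _ hn _ _ hsum.
  exists [:: u]; rewrite big_seq1 in hsum; split => //=.
  by rewrite hsum eqxx.
have sne : s != [::] by rewrite -size_eq0 hsz.
have e1 : \sum_(u <- s) Qf a u u <= (size s)%:R by rewrite hsz hsum.
have [p ps hp] := @exists_le1 _ _ (fun u => Qf a u u) _ sne e1.
have hr1 : size (rem p s) = k.+1 by rewrite size_rem // hsz.
have Hsum1 : \sum_(u <- s) Qf a u u = Qf a p p + \sum_(u <- rem p s) Qf a u u.
  by rewrite (perm_big _ (perm_to_rem ps)) big_cons.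
have r1ne : rem p s != [::] by rewrite -size_eq0 hr1.
have hk2 : ((k.+2)%:R : R) = 1 + (k.+1)%:R := mulrS _ _.
have e2 : (size (rem p s))%:R <= \sum_(u <- rem p s) Qf a u u.
  by rewrite hr1; move: hsum; rewrite Hsum1 hk2; lra.
have [q qr1 hq1] := @exists_ge1 _ _ (fun u => Qf a u u) _ r1ne e2.
have hr2 : size (rem q (rem p s)) = k by rewrite size_rem // hr1.
have Hsum2 : \sum_(u <- rem p s) Qf a u u =
    Qf a q q + \sum_(u <- rem q (rem p s)) Qf a u u.
  by rewrite (perm_big _ (perm_to_rem qr1)) big_cons.
set r2 := rem q (rem p s) in hr2 Hsum2 *.
have mr2 : forall u, u \in r2 -> u \in s by move=> u /mem_rem /mem_rem.
have qs : q \in s by apply: mem_rem qr1.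
have dS : symmetric (fun u v : 'rV[R]_N => dotv u v == 0).
  by move=> u v; rewrite dotvC.
have qS : symmetric (fun u v : 'rV[R]_N => Qf a u v == 0).
  by move=> u v; rewrite QfC.
have := @pairwise_rem _ _ _ _ dS hd ps; rewrite pairwise_cons => /andP[pd1a pd1b].
have := @pairwise_rem _ _ _ _ dS pd1b qr1; rewrite pairwise_cons => /andP[pd2a pd2b].
have := @pairwise_rem _ _ _ _ qS hq ps; rewrite pairwise_cons => /andP[pq1a pq1b].
have := @pairwise_rem _ _ _ _ qS pq1b qr1; rewrite pairwise_cons => /andP[pq2a pq2b].
have dpq : dotv p q = 0 by apply/eqP; apply: (allP pd1a).
have Qpq : Qf a p q = 0 by apply/eqP; apply: (allP pq1a).
have dqp : dotv q p = 0 by rewrite dotvC.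
have Qqp : Qf a q p = 0 by rewrite QfC.
have dpu : forall u, u \in r2 -> dotv p u = 0.
  by move=> u hu; apply/eqP; apply: (allP pd1a); apply: mem_rem hu.
have dqu : forall u, u \in r2 -> dotv q u = 0.
  by move=> u hu; apply/eqP; apply: (allP pd2a).
have Qpu : forall u, u \in r2 -> Qf a p u = 0.
  by move=> u hu; apply/eqP; apply: (allP pq1a); apply: mem_rem hu.
have Qqu : forall u, u \in r2 -> Qf a q u = 0.
  by move=> u hu; apply/eqP; apply: (allP pq2a).
have npp : dotv p p = 1 by apply/eqP; apply: (allP hn).
have nqq : dotv q q = 1 by apply/eqP; apply: (allP hn).
have [c [sn [hcs hcq]]] := @rotation _ _ _ hp hq1.
set w := c *: p + sn *: q.
set w' := (- sn) *: p + c *: q.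
have ww' : dotv w w' = 0.
  by rewrite /w /w' dotvDl !dotvDr npp nqq dpq dqp; ring.
have wu : forall u, u \in r2 -> dotv w u = 0.
  by move=> u hu; rewrite /w dotvDl dpu // dqu //; ring.
have w'u : forall u, u \in r2 -> dotv w' u = 0.
  by move=> u hu; rewrite /w' dotvDl dpu // dqu //; ring.
have Qw'u : forall u, u \in r2 -> Qf a w' u = 0.
  by move=> u hu; rewrite /w' QfDl Qpu // Qqu //; ring.
have Qw' : Qf a w' w' + 1 = (c ^+ 2 + sn ^+ 2) * (Qf a p p + Qf a q q).
  by rewrite -{1}hcq /w' QfDl !QfDr Qpq Qqp; ring.
rewrite hcs mul1r in Qw'.
have hsz' : size (w' :: r2) = k.+1 by rewrite /= hr2.
have := IH (w' :: r2) hsz'.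
case.
- rewrite /=; apply/andP; split.
    by apply/eqP; rewrite /w' dotvDl !dotvDr npp nqq dpq dqp -[RHS]hcs; ring.
  by apply/allP => u /mr2; apply: (allP hn).
- rewrite pairwise_cons pd2b andbT; apply/allP => u hu.
  by rewrite w'u.
- rewrite pairwise_cons pq2b andbT; apply/allP => u hu.
  by rewrite Qw'u.
- rewrite big_cons; move: hsum; rewrite Hsum1 Hsum2 hk2; lra.
move=> t [ht1 ht2 ht3 ht4 ht5].
exists (w :: t); split.
- by rewrite /= ht1.
- rewrite /= ht2 andbT.
  by apply/eqP; rewrite /w dotvDl !dotvDr npp nqq dpq dqp -[RHS]hcs; ring.
- rewrite pairwise_cons ht3 andbT; apply: ht5.
  rewrite /= ww' eqxx /=; apply/allP => u hu; by rewrite wu.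
- rewrite /= ht4 andbT.
  by apply/eqP; rewrite /w QfDl !QfDr Qpq Qqp -[RHS]hcq; ring.
move=> x hx.
have xp : dotv x p = 0 by apply/eqP; apply: (allP hx).
have xq : dotv x q = 0 by apply/eqP; apply: (allP hx).
rewrite /=; apply/andP; split.
  by rewrite /w dotvDr xp xq; apply/eqP; ring.
apply: ht5; rewrite /=; apply/andP; split.
  by rewrite /w' dotvDr xp xq; apply/eqP; ring.
by apply/allP => u /mr2 hu; apply: (allP hx).
Qed.

Lemma dot_delta (R : realType) (N : nat) (x : 'rV[R]_N) (j : 'I_N) :
  dotv x (delta_mx 0 j) = x 0 j.
Proof.
rewrite /dotv (bigD1 j) //= big1 ?addr0; first by rewrite mxE !eqxx mulr1.
by move=> i hi; rewrite mxE eqxx (negbTE hi) mulr0.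
Qed.

Lemma Q_delta (R : realType) (N : nat) (a : 'I_N -> R) (x : 'rV[R]_N) (j : 'I_N) :
  Qf a x (delta_mx 0 j) = a j * x 0 j.
Proof.
rewrite /Qf (bigD1 j) //= big1 ?addr0; first by rewrite mxE !eqxx mulr1.
by move=> i hi; rewrite mxE eqxx (negbTE hi) mulr0 mulr0.
Qed.

Theorem lemma4 (R : realType) (n : nat) (a : 'I_n -> R)
  (ha : forall j, 0 <= a j) (hsum : \sum_(j < n) a j = n%:R) :
  exists v : 'I_n -> 'rV[R]_n,
    orthonormal_basis v /\ forall j, ellipsoid a (v j).
Proof.
pose s0 := [seq (delta_mx 0 j : 'rV[R]_n) | j <- enum 'I_n].
have hs0 : size s0 = n by rewrite size_map size_enum_ord.
have := @main_lemma R n a n s0 hs0.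
case.
- by apply/allP => u /mapP [j _ ->]; rewrite dot_delta mxE !eqxx.
- rewrite pairwise_map; have := enum_uniq 'I_n; rewrite uniq_pairwise.
  apply: sub_pairwise => i j /= hij.
  by rewrite eq_sym in hij; rewrite dot_delta mxE eqxx /= (negbTE hij).
- rewrite pairwise_map; have := enum_uniq 'I_n; rewrite uniq_pairwise.
  apply: sub_pairwise => i j /= hij.
  by rewrite eq_sym in hij; rewrite Q_delta mxE eqxx /= (negbTE hij) mulr0.
- rewrite big_map big_enum /= -hsum; apply: eq_bigr => j _.
  by rewrite Q_delta mxE !eqxx mulr1.
move=> t [ht1 ht2 ht3 ht4 _].
have hdot : forall i j : 'I_n, dotv (nth 0 t i) (nth 0 t j) = (i == j)%:R.
  move=> i j; case: (eqVneq i j) => [<-|hij].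
    by apply/eqP; apply: (all_nthP 0 ht2); rewrite ht1 ltn_ord.
  have pw := (pairwiseP 0 ht3).
  have hi : (i : nat) \in gtn (size t) by rewrite unfold_in /= ht1 ltn_ord.
  have hj : (j : nat) \in gtn (size t) by rewrite unfold_in /= ht1 ltn_ord.
  case: (ltngtP i j) => h.
  - by apply/eqP; apply: pw.
  - by rewrite dotvC; apply/eqP; apply: pw.
  - by move: hij; rewrite (val_inj h) eqxx.
exists (fun j => nth 0 t j); split; first split.
- exact: hdot.
- have h : (\matrix_(i < n) nth 0 t i) *m (\matrix_(i < n) nth 0 t i)^T = 1%:M.
    apply/matrixP => i j; rewrite !mxE -hdot /dotv; apply: eq_bigr => k _.
    by rewrite !mxE.
  exact: (mulmx1_unit h).1.
move=> j; rewrite /ellipsoid.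
have hj : (j < size t)%N by rewrite ht1 ltn_ord.
have := allP ht4 _ (mem_nth 0 hj); move/eqP <-.
by rewrite /Qf; apply: eq_bigr => i _; rewrite expr2.
Qed.
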